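(* Let $1<a<b$ be coprime integers and let $D,E\subseteq G$ be subdiagrams. Then \[ B'(\mathbf{1}_D,\mathbf{1}_E)=|D|-\#\{(i,j)\in D\times U_E:\ i\to j\}. \]
   Context: Fix coprime integers $1<a<b$. Work in the grid $\mathbb{Z}^2$ ($+x$ east, $+y$ north). Let $g:\mathbb{Z}^2\to\mathbb{Z}$, $g(x,y)=ab-ax-by$, and $G=\{(x,y)\in\mathbb{Z}_{\ge1}^2: g(x,y)>0\}$. A subdiagram is a subset $D\subseteq G$ such that whenever $(x,y)\in D$, $(x',y')\in G$, $x'\le x$, $y'\le y$, we have $(x',y')\in D$. $\mathbf{1}_D$ denotes the indicator vector of $D$ in $\mathbb{R}^G$. Define the (non-symmetric) bilinear form on $\mathbb{R}^G$ \[ B'(\mathbf{n},\mathbf{n}')=\sum_{i,j\in G}\big(\mathbf{1}_{0\le g(j)-g(i)<a}-\mathbf{1}_{b\le g(j)-g(i)<a+b}\big)\,n_in'_j. \] For cells $i,j\in\mathbb{Z}^2$, write $i\to j$ iff $0\le g(j)-g(i)<a$. For a subdiagram $E$, $U_E=\{(x,y)\in\mathbb{Z}^2: (x,y)\notin E,\ (x,y-1)\in E\cup(\mathbb{Z}_{\ge1}\times\mathbb{Z}_{\le0})\}$. *)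

(* Defs.v *)
From Stdlib Require Import ZArith List Bool.
Import ListNotations.
Open Scope Z_scope.

Definition g (a b : Z) (p : Z * Z) : Z := a * b - a * fst p - b * snd p.

Definition inG (a b : Z) (p : Z * Z) : bool :=
  (1 <=? fst p) && (1 <=? snd p) && (0 <? g a b p).

Definition zrange (lo hi : Z) : list Z :=
  map (fun k => lo + Z.of_nat k) (seq 0 (Z.to_nat (hi - lo + 1))).

(* the box [1,b] x [1,a]; it contains G (g > 0 forces x < b, y < a) *)
Definition box (a b : Z) : list (Z * Z) := list_prod (zrange 1 b) (zrange 1 a).

Definition Glist (a b : Z) : list (Z * Z) := filter (inG a b) (box a b).

Definition subdiagram (a b : Z) (D : Z * Z -> bool) : Prop :=
  (forall p, D p = true -> inG a b p = true) /\
  (forall p q, D p = true -> inG a b q = true ->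
     fst q <= fst p -> snd q <= snd p -> D q = true).

Definition ind (D : Z * Z -> bool) (p : Z * Z) : Z := if D p then 1 else 0.

Definition sumZ {A} (l : list A) (f : A -> Z) : Z := fold_right (fun x s => f x + s) 0 l.

Definition Bcoef (a b : Z) (i j : Z * Z) : Z :=
  let d := g a b j - g a b i in
  (if (0 <=? d) && (d <? a) then 1 else 0) - (if (b <=? d) && (d <? a + b) then 1 else 0).

Definition Bprime (a b : Z) (n n' : Z * Z -> Z) : Z :=
  sumZ (Glist a b) (fun i => sumZ (Glist a b) (fun j => Bcoef a b i j * n i * n' j)).

Definition arrow (a b : Z) (i j : Z * Z) : bool :=
  (0 <=? g a b j - g a b i) && (g a b j - g a b i <? a).

Definition inU (E : Z * Z -> bool) (p : Z * Z) : bool :=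
  negb (E p) && (E (fst p, snd p - 1) || ((1 <=? fst p) && (snd p - 1 <=? 0))).

Definition cardD (a b : Z) (D : Z * Z -> bool) : nat := length (filter D (Glist a b)).

(* #{(i,j) in D x U_E : i -> j}.  i ranges over G (D is a subset of G);
   j ranges over the box [1,b]x[1,a], which contains every j in U_E with i -> j
   for some i in G. *)
Definition arrowCount (a b : Z) (D E : Z * Z -> bool) : nat :=
  length (filter (fun ij => D (fst ij) && inU E (snd ij) && arrow a b (fst ij) (snd ij))
                 (list_prod (Glist a b) (box a b))).

(* Main.v *)
Require Import Defs.
From Stdlib Require Import ZArith List Bool Lia.
Import ListNotations.
Open Scope Z_scope.

Lemma sumZ_app {A} (l1 l2 : list A) f : sumZ (l1 ++ l2) f = sumZ l1 f + sumZ l2 f.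
Proof. induction l1; simpl; [lia|]. rewrite IHl1; lia. Qed.

Lemma sumZ_map {A B} (h : A -> B) l f : sumZ (map h l) f = sumZ l (fun x => f (h x)).
Proof. induction l; simpl; auto. rewrite IHl; auto. Qed.

Lemma sumZ_ext {A} (l : list A) f h : (forall x, In x l -> f x = h x) -> sumZ l f = sumZ l h.
Proof. induction l; simpl; intros H; auto. rewrite H, IHl; auto. Qed.

Lemma sumZ_add {A} (l : list A) f h : sumZ l (fun x => f x + h x) = sumZ l f + sumZ l h.
Proof. induction l; simpl; auto. rewrite IHl; lia. Qed.

Lemma sumZ_sub {A} (l : list A) f h : sumZ l (fun x => f x - h x) = sumZ l f - sumZ l h.
Proof. induction l; simpl; auto. rewrite IHl; lia. Qed.

Lemma sumZ_mulc {A} (l : list A) c f : sumZ l (fun x => c * f x) = c * sumZ l f.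
Proof. induction l; simpl; auto. lia. rewrite IHl; lia. Qed.

Lemma sumZ_zero {A} (l : list A) : sumZ l (fun _ => 0) = 0.
Proof. induction l; simpl; auto. Qed.

Lemma sumZ_filter {A} (p : A -> bool) l f :
  sumZ (filter p l) f = sumZ l (fun x => if p x then f x else 0).
Proof. induction l; simpl; auto. destruct (p a); simpl; rewrite IHl; lia. Qed.

Lemma len_filter {A} (p : A -> bool) l :
  Z.of_nat (length (filter p l)) = sumZ l (fun x => if p x then 1 else 0).
Proof. induction l; simpl; auto. destruct (p a); simpl length; rewrite ?Nat2Z.inj_succ, IHl; lia. Qed.

Lemma sumZ_prod {A B} (l1 : list A) (l2 : list B) f :
  sumZ (list_prod l1 l2) f = sumZ l1 (fun x => sumZ l2 (fun y => f (x, y))).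
Proof. induction l1; simpl; auto. rewrite sumZ_app, sumZ_map, IHl1; auto. Qed.

Lemma sumZ_cons {A} (x : A) l f : sumZ (x :: l) f = f x + sumZ l f.
Proof. reflexivity. Qed.
Lemma sumZ_nil {A} (f : A -> Z) : sumZ nil f = 0.
Proof. reflexivity. Qed.

Lemma tele (F : nat -> Z) n s : sumZ (seq s n) (fun k => F k - F (S k)) = F s - F (s + n)%nat.
Proof.
  revert s; induction n; intros s.
  - rewrite Nat.add_0_r; cbn [seq]; rewrite sumZ_nil; lia.
  - cbn [seq]; rewrite sumZ_cons, IHn, Nat.add_succ_r; change (S s + n)%nat with (S (s + n)); lia.
Qed.

Lemma ind_sum lo c n s :
  sumZ (seq s n) (fun k => if lo + Z.of_nat k =? c then 1 else 0) =
  if (lo + Z.of_nat s <=? c) && (c <? lo + Z.of_nat (s + n)) then 1 else 0.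
Proof.
  revert s; induction n; intros s; cbn [seq]; rewrite ?sumZ_nil, ?sumZ_cons.
  - rewrite Nat.add_0_r. destruct (Z.leb_spec (lo + Z.of_nat s) c); destruct (Z.ltb_spec c (lo + Z.of_nat s)); simpl; lia.
  - rewrite IHn. rewrite Nat.add_succ_r. rewrite ?Nat2Z.inj_add, ?Nat2Z.inj_succ, ?Nat2Z.inj_add.
    repeat match goal with
    | |- context [Z.eqb ?x ?y] => destruct (Z.eqb_spec x y)
    | |- context [Z.leb ?x ?y] => destruct (Z.leb_spec x y)
    | |- context [Z.ltb ?x ?y] => destruct (Z.ltb_spec x y)
    end; cbn [andb]; lia.
Qed.

Lemma in_zrange lo hi x : In x (zrange lo hi) -> lo <= x <= hi.
Proof.
  unfold zrange; intros H. apply in_map_iff in H. destruct H as [k [<- Hk]].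
  apply in_seq in Hk. lia.
Qed.

Lemma g_pt a b x y : g a b (x, y) = a * b - a * x - b * y.
Proof. reflexivity. Qed.

Lemma mul_small a k : 0 < a -> - a < a * k < a -> k = 0.
Proof. intros. nia. Qed.

Lemma mul_lt a q m : 0 < a -> a * q < a * m -> q < m.
Proof. intros. nia. Qed.

Ltac bcases := repeat match goal with
    | |- context [Z.eqb ?x ?y] => destruct (Z.eqb_spec x y)
    | |- context [Z.leb ?x ?y] => destruct (Z.leb_spec x y)
    | |- context [Z.ltb ?x ?y] => destruct (Z.ltb_spec x y)
    end; cbn [andb orb negb].

Lemma Bcoef_col a b i x y :
  Bcoef a b i (x, y) = (if arrow a b i (x, y) then 1 else 0) - (if arrow a b i (x, y + 1) then 1 else 0).
Proof.
  unfold Bcoef, arrow. rewrite !g_pt. generalize (g a b i); intro gi.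
  bcases; lia.
Qed.

Lemma inG_le a b p : 0 < a -> 0 < b -> inG a b p = true -> 0 < g a b p <= a * b - a - b.
Proof.
  destruct p as [x y]. unfold inG; rewrite g_pt; cbn [fst snd].
  intros Ha Hb H. apply andb_prop in H as [H H3]. apply andb_prop in H as [H1 H2].
  apply Z.leb_le in H1; apply Z.leb_le in H2; apply Z.ltb_lt in H3. nia.
Qed.

Lemma col a b E i x :
  1 < a -> a < b -> subdiagram a b E -> 1 <= x ->
  sumZ (zrange 1 a) (fun y => Bcoef a b i (x, y) * ind E (x, y)) +
  sumZ (zrange 1 a) (fun y => if inU E (x, y) && arrow a b i (x, y) then 1 else 0) =
  if arrow a b i (x, 1) then 1 else 0.
Proof.
  intros Ha Hab [HE1 HE2] Hx.
  rewrite <- sumZ_add. unfold zrange. rewrite sumZ_map.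
  set (A := fun y => if arrow a b i (x, y) then 1 else 0).
  set (e := fun y => if y <=? 0 then 1 else ind E (x, y)).
  rewrite (sumZ_ext _ _ (fun k => (fun k => A (1 + Z.of_nat k) * e (1 + Z.of_nat k - 1)) k
                               - (fun k => A (1 + Z.of_nat k) * e (1 + Z.of_nat k - 1)) (S k))).
  - rewrite tele. rewrite Nat.add_0_l, Z2Nat.id by lia. cbn beta.
    unfold A, e. replace (1 + Z.of_nat 0 - 1) with 0 by lia. replace (1 + (a - 1 + 1) - 1) with a by lia.
    replace (1 + Z.of_nat 0) with 1 by lia. cbn [Z.leb]. 
    destruct (Z.leb_spec a 0); [lia|].
    assert (ind E (x, a) = 0) as ->.
    { unfold ind. destruct (E (x, a)) eqn:Hxa; auto.
      apply HE1 in Hxa. apply (inG_le a b) in Hxa; try lia. rewrite g_pt in Hxa. nia. }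
    replace (0 <=? 0) with true by reflexivity. lia.
  - intros k Hk. apply in_seq in Hk. cbn beta.
    rewrite Nat2Z.inj_succ.
    set (y := 1 + Z.of_nat k).
    replace (1 + Z.succ (Z.of_nat k)) with (y + 1) by (unfold y; lia).
    replace (y + 1 - 1) with y by lia.
    assert (1 <= y) by (unfold y; lia).
    rewrite Bcoef_col. fold (A y). fold (A (y + 1)).
    unfold e. destruct (Z.leb_spec y 0); [lia|].
    unfold inU; cbn [fst snd].
    destruct (Z.eq_dec y 1) as [Hy1|Hy1].
    + rewrite Hy1. replace (1 - 1) with 0 by lia. replace (0 <=? 0) with true by reflexivity.
      destruct (Z.leb_spec 1 x); [|lia]. cbn [andb orb].
      unfold ind, A. destruct (E (x, 1)), (E (x, 0)), (arrow a b i (x, 1)), (arrow a b i (x, 1 + 1)); cbn; lia.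
    + destruct (Z.leb_spec (y - 1) 0); [lia|]. rewrite andb_false_r, orb_false_r.
      unfold ind, A.
      destruct (E (x, y)) eqn:Ey.
      * assert (E (x, y - 1) = true) as ->.
        { apply (HE2 (x, y)); cbn [fst snd]; auto; try lia.
          apply HE1 in Ey. unfold inG in *; rewrite g_pt in *; cbn [fst snd] in *.
          apply andb_prop in Ey as [Ey E3]. apply andb_prop in Ey as [E1 E2].
          apply Z.leb_le in E1; apply Z.leb_le in E2; apply Z.ltb_lt in E3.
          bcases; lia. }
        destruct (arrow a b i (x, y)), (arrow a b i (x, y + 1)); cbn; lia.
      * destruct (E (x, y - 1)), (arrow a b i (x, y)), (arrow a b i (x, y + 1)); cbn; lia.
Qed.

Lemma row_one a b i : 1 < a -> a < b -> inG a b i = true ->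
  sumZ (zrange 1 b) (fun x => if arrow a b i (x, 1) then 1 else 0) = 1.
Proof.
  intros Ha Hab Hi. apply (inG_le a b) in Hi; try lia.
  set (gi := g a b i) in *.
  set (t := gi + b). set (q := (t + a - 1) / a).
  assert (Hd := Z.div_mod (t + a - 1) a ltac:(lia)).
  assert (Hr := Z.mod_pos_bound (t + a - 1) a ltac:(lia)).
  fold q in Hd. set (r := (t + a - 1) mod a) in *.
  set (c := b - q).
  assert (q < b) by (apply (mul_lt a); lia).
  assert (0 < q) by (apply (mul_lt a); lia).
  rewrite (sumZ_ext _ _ (fun x => if x =? c then 1 else 0)).
  - unfold zrange. rewrite sumZ_map. rewrite ind_sum.
    bcases; lia.
  - intros x _. unfold arrow. rewrite g_pt. fold gi.
    destruct (Z.eqb_spec x c).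
    + subst x. unfold c. bcases; lia.
    + bcases; auto. exfalso. apply n.
      assert (b - x - q = 0); [|unfold c; lia].
      apply (mul_small a); lia.
Qed.

Lemma key a b E i : 1 < a -> a < b -> subdiagram a b E -> inG a b i = true ->
  sumZ (zrange 1 b) (fun x => sumZ (zrange 1 a) (fun y => Bcoef a b i (x,y) * ind E (x,y))) =
  1 - sumZ (zrange 1 b) (fun x => sumZ (zrange 1 a) (fun y => if inU E (x,y) && arrow a b i (x,y) then 1 else 0)).
Proof.
  intros Ha Hab HE Hi. pose proof (row_one a b i Ha Hab Hi) as R.
  match goal with |- _ = 1 - ?S =>
    transitivity (sumZ (zrange 1 b) (fun x => if arrow a b i (x,1) then 1 else 0) - S);
    [| rewrite R; reflexivity] end.
  rewrite <- sumZ_sub.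
  apply sumZ_ext. intros x Hx. apply in_zrange in Hx.
  rewrite <- (col a b E i x) by (auto; lia). lia.
Qed.

Theorem lemma4p1 (a b : Z) (D E : Z * Z -> bool) :
  1 < a -> a < b -> Z.gcd a b = 1 ->
  subdiagram a b D -> subdiagram a b E ->
  Bprime a b (ind D) (ind E) = Z.of_nat (cardD a b D) - Z.of_nat (arrowCount a b D E).
Proof.
  intros Ha Hab _ HD HE.
  unfold Bprime, cardD, arrowCount. rewrite !len_filter, sumZ_prod.
  rewrite <- sumZ_sub.
  apply sumZ_ext. intros i Hi.
  assert (Gi : inG a b i = true) by (unfold Glist in Hi; apply filter_In in Hi; tauto).
  cbn [fst snd]. unfold Glist. rewrite sumZ_filter. unfold box. rewrite !sumZ_prod.
  rewrite (sumZ_ext _ _ (fun x => ind D i * sumZ (zrange 1 a) (fun y => Bcoef a b i (x,y) * ind E (x,y)))).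
  2:{ intros x _. rewrite <- sumZ_mulc. apply sumZ_ext. intros y _.
      destruct (inG a b (x, y)) eqn:Gxy; [lia|].
      unfold ind at 2. destruct (E (x, y)) eqn:Exy; [|lia].
      apply (proj1 HE) in Exy. congruence. }
  rewrite sumZ_mulc. destruct (D i) eqn:Di.
  - replace (ind D i) with 1 by (unfold ind; rewrite Di; auto). rewrite (key a b E i) by auto. cbn [andb]. lia.
  - replace (ind D i) with 0 by (unfold ind; rewrite Di; auto). cbn [andb]. rewrite Z.mul_0_l. rewrite (sumZ_ext _ _ (fun _ => 0)).
    + rewrite sumZ_zero. lia.
    + intros x _. apply sumZ_zero.
Qed.
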